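(* Consider the heterogeneous agents $$\dot x_i=\sum_{j=1}^N\alpha_{ij}(t)(y_j-y_i),\qquad y_i=\mathrm{sat}_i(x_i),\qquad i\in\mathcal V=\{1,\dots,N\},$$ with pairwise distinct saturation levels $s_i>0$, where the time-varying undirected graph satisfies the standing assumptions, is integrally connected over $[0,\infty)$, and satisfies $\alpha_{ij}(t)\in\{0\}\cup[\alpha_{\min},\alpha_{\max}]$ with constants $0<\alpha_{\min}\le\alpha_{\max}$. Assume not all $x_i(t_0)$ are equal. Then the agents achieve consensus if and only if $$\frac1N\Big|\sum_{i=1}^N x_i(t_0)\Big|\le\min_{i\in\mathcal V}s_i.$$
   Context: $\mathrm{sat}_i(x)=\mathrm{sign}(x)\min\{|x|,s_i\}$. Standing assumptions: $\alpha_{ij}(t)=\alpha_{ji}(t)\ge0$, each $\alpha_{ij}$ continuous on $[0,\infty)$ except on a set of measure zero; Carathéodory solutions. Integral graph: $\bar\alpha_{ij}=1$ if $\int_0^\infty\alpha_{ij}(t)dt=\infty$, else $0$; integrally connected means the integral graph is connected. Consensus: there is $C$ with $\lim_{t\to\infty}x_i(t)=C$ for all $i$. *)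

(* Defs.v *)
From Stdlib Require Import Reals Lra.
Open Scope R_scope.

Fixpoint rsum (f : nat -> R) (n : nat) : R :=
  match n with
  | O => 0
  | S m => rsum f m + f m
  end.

Definition Rsign (x : R) : R :=
  match Rlt_dec 0 x with
  | left _ => 1
  | right _ => match Rlt_dec x 0 with left _ => -1 | right _ => 0 end
  end.

Definition sat (s x : R) : R := Rsign x * Rmin (Rabs x) s.

Definition measure_zero (D : R -> Prop) : Prop :=
  forall eps, 0 < eps ->
    exists a b : nat -> R,
      (forall n, a n <= b n) /\
      (forall t, D t -> exists n, a n < t < b n) /\
      (forall m, rsum (fun n => b n - a n) m <= eps).

Definition cont_ae_nonneg (f : R -> R) : Prop :=
  exists D, measure_zero D /\ forall t, 0 <= t -> ~ D t -> continuity_pt f t.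

Definition integral_diverges (f : R -> R) : Prop :=
  forall M, exists T (pr : Riemann_integrable f 0 T), 0 <= T /\ M < RiemannInt pr.

Inductive reach (N : nat) (E : nat -> nat -> Prop) : nat -> nat -> Prop :=
  | reach_refl : forall i, (i < N)%nat -> reach N E i i
  | reach_step : forall i j k, reach N E i j -> (k < N)%nat -> E j k -> reach N E i k.

Definition graph_connected (N : nat) (E : nat -> nat -> Prop) : Prop :=
  forall i j, (i < N)%nat -> (j < N)%nat -> reach N E i j.

Definition integrally_connected (N : nat) (alpha : nat -> nat -> R -> R) : Prop :=
  graph_connected N (fun i j => integral_diverges (alpha i j)).

Definition rhs (N : nat) (s : nat -> R) (alpha : nat -> nat -> R -> R)
  (x : nat -> R -> R) (i : nat) (t : R) : R :=
  rsum (fun j => alpha i j t * (sat (s j) (x j t) - sat (s i) (x i t))) N.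

(* Caratheodory solution on [t0, oo), in integral form *)
Definition is_solution (N : nat) (s : nat -> R) (alpha : nat -> nat -> R -> R)
  (t0 : R) (x : nat -> R -> R) : Prop :=
  forall i, (i < N)%nat -> forall t, t0 <= t ->
    exists pr : Riemann_integrable (rhs N s alpha x i) t0 t,
      x i t = x i t0 + RiemannInt pr.

Definition tends_at_infty (f : R -> R) (C : R) : Prop :=
  forall eps, 0 < eps -> exists T, forall t, T <= t -> Rabs (f t - C) < eps.

Definition consensus (N : nat) (x : nat -> R -> R) : Prop :=
  exists C, forall i, (i < N)%nat -> tends_at_infty (x i) C.

(* Main.v *)
Require Import Defs.
From Stdlib Require Import Reals Lra Lia FunctionalExtensionality Classical ClassicalEpsilon.
From Coquelicot Require Import Coquelicot.
Open Scope R_scope.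

Lemma rsum_ext f g n : (forall i, (i < n)%nat -> f i = g i) -> rsum f n = rsum g n.
Proof. induction n; simpl; intros H; auto. rewrite IHn by (intros; apply H; lia). rewrite H by lia. auto. Qed.

Lemma rsum_plus f g n : rsum (fun i => f i + g i) n = rsum f n + rsum g n.
Proof. induction n; simpl; [ring| rewrite IHn; ring]. Qed.

Lemma rsum_scal f c n : rsum (fun i => c * f i) n = c * rsum f n.
Proof. induction n; simpl; [ring| rewrite IHn; ring]. Qed.

Lemma rsum_minus f g n : rsum (fun i => f i - g i) n = rsum f n - rsum g n.
Proof. induction n; simpl; [ring| rewrite IHn; ring]. Qed.

Lemma rsum_const c n : rsum (fun _ => c) n = INR n * c.
Proof. induction n; [simpl; ring|]. cbn [rsum]. rewrite IHn, S_INR. ring. Qed.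

Lemma rsum_le f g n : (forall i, (i < n)%nat -> f i <= g i) -> rsum f n <= rsum g n.
Proof. induction n; simpl; intros H; try lra. assert (f n <= g n) by (apply H; lia).
 assert (rsum f n <= rsum g n) by (apply IHn; intros; apply H; lia). lra. Qed.

Lemma rsum_nonneg f n : (forall i, (i < n)%nat -> 0 <= f i) -> 0 <= rsum f n.
Proof. intros H. replace 0 with (rsum (fun _ => 0) n). apply rsum_le; auto.
 rewrite rsum_const; lra. Qed.

Lemma rsum_ge_term f n p : (forall i, (i < n)%nat -> 0 <= f i) -> (p < n)%nat -> f p <= rsum f n.
Proof. induction n; simpl; intros H Hp; try lia.
 destruct (Nat.eq_dec p n).
 - subst. assert (0 <= rsum f n) by (apply rsum_nonneg; intros; apply H; lia). lra.
 - assert (f p <= rsum f n) by (apply IHn; [intros; apply H; lia| lia]).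
   assert (0 <= f n) by (apply H; lia). lra. Qed.

Lemma rsum_le_two_aux f n p q : (forall i, (i < n)%nat -> f i <= 0) -> p <> q ->
  rsum f n <= (if Nat.ltb p n then f p else 0) + (if Nat.ltb q n then f q else 0).
Proof. intros H Hpq. induction n; simpl. lra.
 assert (IH: rsum f n <= (if Nat.ltb p n then f p else 0) + (if Nat.ltb q n then f q else 0))
   by (apply IHn; intros; apply H; lia).
 assert (Hn: f n <= 0) by (apply H; lia).
 destruct (Nat.ltb p n) eqn:E1; destruct (Nat.ltb q n) eqn:E2;
 destruct (Nat.ltb p (S n)) eqn:E3; destruct (Nat.ltb q (S n)) eqn:E4;
 rewrite ?Nat.ltb_lt, ?Nat.ltb_ge in *; try lia; try lra.
 all: first [assert (q=n) by lia; subst; lra | assert (p = n) by lia; subst; lra].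
Qed.

Lemma rsum_le_two f n p q : (forall i, (i < n)%nat -> f i <= 0) -> (p < n)%nat -> (q < n)%nat -> p <> q ->
  rsum f n <= f p + f q.
Proof. intros H Hp Hq Hpq. pose proof (rsum_le_two_aux f n p q H Hpq).
 apply Nat.ltb_lt in Hp, Hq. rewrite Hp, Hq in H0. auto. Qed.

Lemma rsum_swap (F : nat -> nat -> R) n m :
  rsum (fun i => rsum (fun j => F i j) m) n = rsum (fun j => rsum (fun i => F i j) n) m.
Proof. induction n; simpl.
 - rewrite rsum_const; simpl; lra.
 - rewrite IHn. rewrite <- rsum_plus. auto. Qed.

Lemma rsum_abs f n : Rabs (rsum f n) <= rsum (fun i => Rabs (f i)) n.
Proof. induction n; simpl. rewrite Rabs_R0; lra.
 eapply Rle_trans. apply Rabs_triang. lra. Qed.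

Lemma RI_plus f g a b: ex_RInt f a b -> ex_RInt g a b -> RInt (fun x => f x + g x) a b = RInt f a b + RInt g a b.
Proof. intros. apply (RInt_plus f g); auto. Qed.
Lemma RI_scal f a b l: ex_RInt f a b -> RInt (fun x => l * f x) a b = l * RInt f a b.
Proof. intros. apply (RInt_scal f); auto. Qed.
Lemma RI_const a b c: RInt (fun _ => c) a b = (b - a) * c.
Proof. apply (RInt_const a b c). Qed.
Lemma exRI_plus f g a b: ex_RInt f a b -> ex_RInt g a b -> ex_RInt (fun x => f x + g x) a b.
Proof. intros. apply (ex_RInt_plus f g); auto. Qed.
Lemma exRI_scal f a b l: ex_RInt f a b -> ex_RInt (fun x => l * f x) a b.
Proof. intros. apply (ex_RInt_scal f); auto. Qed.
Lemma exRI_const a b (c : R): ex_RInt (fun _ => c) a b.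
Proof. apply (@ex_RInt_const R_NormedModule a b c). Qed.
Lemma RI_chasles f a b c: ex_RInt f a b -> ex_RInt f b c -> RInt f a b + RInt f b c = RInt f a c.
Proof. intros. apply (RInt_Chasles f); auto. Qed.

Lemma exRI_sub (f : R -> R) a b c d : a <= c -> c <= d -> d <= b -> ex_RInt f a b -> ex_RInt f c d.
Proof. intros. apply (@ex_RInt_Chasles_1 R_CompleteNormedModule _ c d b). lra.
 apply (@ex_RInt_Chasles_2 R_CompleteNormedModule _ a c b). lra. auto. Qed.

Lemma rsum_RInt (F : nat -> R -> R) n a b : (forall i, (i < n)%nat -> ex_RInt (F i) a b) ->
  ex_RInt (fun t => rsum (fun i => F i t) n) a b /\
  RInt (fun t => rsum (fun i => F i t) n) a b = rsum (fun i => RInt (F i) a b) n.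
Proof. induction n; intros H; simpl.
 - split. apply exRI_const. rewrite RI_const. ring.
 - destruct IHn as [E1 E2]. intros; apply H; lia.
   assert (Hn: ex_RInt (F n) a b) by (apply H; lia).
   split. apply exRI_plus; auto.
   rewrite (RI_plus _ _ _ _ E1 Hn), E2. auto. Qed.

Lemma RI_le_const f a b K : a <= b -> ex_RInt f a b -> (forall t, a <= t <= b -> f t <= K) -> RInt f a b <= (b - a) * K.
Proof. intros. rewrite <- RI_const. apply RInt_le; auto. apply exRI_const. intros; apply H1; lra. Qed.

Lemma RI_ge_const f a b K : a <= b -> ex_RInt f a b -> (forall t, a <= t <= b -> K <= f t) -> (b - a) * K <= RInt f a b.
Proof. intros. rewrite <- RI_const. apply RInt_le; auto. apply exRI_const. intros; apply H1; lra. Qed.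

Lemma sat_eq s x : 0 < s -> sat s x = Rmax (-s) (Rmin x s).
Proof. intros Hs. unfold sat, Rsign, Rmin, Rmax.
 destruct (Rlt_dec 0 x); [|destruct (Rlt_dec x 0)];
 destruct (Rle_dec (Rabs x) s); destruct (Rle_dec x s); destruct (Rle_dec (-s) _);
 try (rewrite Rabs_right in * by lra); try (rewrite Rabs_left in * by lra); try lra.
 all: try (destruct (Rle_dec (-s) x); lra).
 all: assert (x = 0) by lra; subst; try rewrite Rabs_R0 in *; try lra.
Qed.

Ltac dRle := repeat match goal with |- context [Rle_dec ?a ?b] =>
  lazymatch a with context [Rle_dec _ _] => fail | _ =>
  lazymatch b with context [Rle_dec _ _] => fail | _ => destruct (Rle_dec a b) end end end.
Ltac dRabs := unfold Rabs; repeat match goal with |- context [Rcase_abs ?a] => destruct (Rcase_abs a) end.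

Lemma sat_mono s x y : 0 < s -> x <= y -> sat s x <= sat s y.
Proof. intros Hs H. rewrite !sat_eq by auto. unfold Rmax, Rmin.
 dRle; lra. Qed.

Lemma sat_lip s x y : 0 < s -> Rabs (sat s x - sat s y) <= Rabs (x - y).
Proof. intros Hs. rewrite !sat_eq by auto. unfold Rmax, Rmin.
 dRle;
 dRabs; lra. Qed.

Lemma sat_bound s x : 0 < s -> Rabs (sat s x) <= s.
Proof. intros Hs. rewrite !sat_eq by auto. unfold Rmax, Rmin.
 dRle;
 dRabs; lra. Qed.

Lemma sat_fix s x : 0 < s -> -s <= x <= s -> sat s x = x.
Proof. intros Hs H. rewrite !sat_eq by auto. unfold Rmax, Rmin.
 dRle; lra. Qed.

Lemma sat_ge s th x : 0 < s -> -s <= th <= s -> th <= x -> th <= sat s x.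
Proof. intros. rewrite <- (sat_fix s th) at 1 by auto. apply sat_mono; auto. Qed.

Lemma sat_le s th x : 0 < s -> -s <= th <= s -> x <= th -> sat s x <= th.
Proof. intros. rewrite <- (sat_fix s th) by auto. apply sat_mono; auto. Qed.

Lemma sat_opp s x : 0 < s -> sat s (-x) = - sat s x.
Proof. intros Hs. rewrite !sat_eq by auto. unfold Rmax, Rmin.
 dRle; lra. Qed.

Lemma absle a b : Rabs a <= b -> -b <= a <= b.
Proof. unfold Rabs; destruct (Rcase_abs a); intros; lra. Qed.

Lemma abslt a b : Rabs a < b -> -b < a < b.
Proof. unfold Rabs; destruct (Rcase_abs a); intros; lra. Qed.

Definition Hyp N s (alpha : nat -> nat -> R -> R) amax t0 x : Prop :=
  (forall i, (i<N)%nat -> 0 < s i) /\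
  (forall i j t, (i<N)%nat -> (j<N)%nat -> 0 <= t -> alpha i j t = alpha j i t) /\
  (forall i j t, (i<N)%nat -> (j<N)%nat -> 0 <= t -> 0 <= alpha i j t <= amax) /\
  0 <= amax /\ 0 <= t0 /\ is_solution N s alpha t0 x.

Lemma sol_int N s alpha amax t0 x i u t : Hyp N s alpha amax t0 x -> (i < N)%nat -> t0 <= u <= t ->
  ex_RInt (rhs N s alpha x i) u t /\ x i t - x i u = RInt (rhs N s alpha x i) u t.
Proof. intros (Hs & Hsym & Ha & Hamax & Ht0 & Hsol) Hi Hu.
 destruct (Hsol i Hi t ltac:(lra)) as [pr Ex].
 destruct (Hsol i Hi u ltac:(lra)) as [pru Exu].
 rewrite <- RInt_Reals in Ex, Exu.
 assert (E1: ex_RInt (rhs N s alpha x i) t0 t) by (apply ex_RInt_Reals_1; auto).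
 assert (E2: ex_RInt (rhs N s alpha x i) t0 u) by (apply (@ex_RInt_Chasles_1 R_CompleteNormedModule _ t0 u t); [lra|exact E1]).
 assert (E3: ex_RInt (rhs N s alpha x i) u t) by (apply (@ex_RInt_Chasles_2 R_CompleteNormedModule _ t0 u t); [lra|exact E1]).
 split; auto. pose proof (RI_chasles _ _ _ _ E2 E3). lra. Qed.

Lemma rhs_bound N s alpha amax t0 x : Hyp N s alpha amax t0 x ->
  exists K, 0 <= K /\ forall i t, (i < N)%nat -> 0 <= t -> Rabs (rhs N s alpha x i t) <= K.
Proof. intros (Hs & Hsym & Ha & Hamax & Ht0 & Hsol).
 set (S := rsum s N).
 assert (HS: forall i, (i < N)%nat -> s i <= S).
 { intros. apply rsum_ge_term; auto. intros; apply Rlt_le; auto. }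
 exists (amax * rsum (fun j => s j + S) N). split.
 - apply Rmult_le_pos; auto. apply rsum_nonneg. intros. pose proof (Hs i H). pose proof (HS i H). lra.
 - intros i t Hi Ht. unfold rhs. eapply Rle_trans. apply rsum_abs.
   rewrite <- rsum_scal. apply rsum_le. intros j Hj.
   rewrite Rabs_mult. destruct (Ha i j t Hi Hj Ht).
   rewrite (Rabs_right (alpha i j t)) by lra.
   apply Rmult_le_compat; auto. apply Rabs_pos.
   eapply Rle_trans. apply Rabs_triang. rewrite Rabs_Ropp.
   pose proof (sat_bound (s j) (x j t) (Hs j Hj)). pose proof (sat_bound (s i) (x i t) (Hs i Hi)).
   pose proof (HS i Hi). lra. Qed.

Lemma x_lip N s alpha amax t0 x K i u t : Hyp N s alpha amax t0 x ->
  (forall i t, (i < N)%nat -> 0 <= t -> Rabs (rhs N s alpha x i t) <= K) ->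
  (i < N)%nat -> t0 <= u <= t -> Rabs (x i t - x i u) <= K * (t - u).
Proof. intros H HK Hi Hu. pose proof H as (Hs & Hsym & Ha & Hamax & Ht0 & Hsol).
 destruct (sol_int _ _ _ _ _ _ i u t H Hi Hu) as [E Eq]. rewrite Eq.
 apply Rabs_le. split.
 - replace (- (K * (t - u))) with ((t - u) * (-K)) by ring. apply RI_ge_const; try lra; auto.
   intros. pose proof (HK i t1 Hi ltac:(lra)). apply absle in H1; lra.
 - replace (K * (t - u)) with ((t - u) * K) by ring. apply RI_le_const; try lra; auto.
   intros. pose proof (HK i t1 Hi ltac:(lra)). apply absle in H1; lra.
Qed.

Lemma dbl (A : nat -> nat -> R) (g Y : nat -> R) n :
  (forall i j, (i < n)%nat -> (j < n)%nat -> A i j = A j i) ->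
  2 * rsum (fun i => g i * rsum (fun j => A i j * (Y j - Y i)) n) n =
  rsum (fun i => rsum (fun j => A i j * ((g i - g j) * (Y j - Y i))) n) n.
Proof. intros Hs.
 set (L := rsum (fun i => rsum (fun j => g i * (A i j * (Y j - Y i))) n) n).
 assert (E1: rsum (fun i => g i * rsum (fun j => A i j * (Y j - Y i)) n) n = L).
 { unfold L. apply rsum_ext. intros. rewrite <- rsum_scal. auto. }
 assert (E2: L = rsum (fun i => rsum (fun j => g j * (A i j * (Y i - Y j))) n) n).
 { unfold L. rewrite rsum_swap. apply rsum_ext. intros i Hi. apply rsum_ext. intros j Hj.
   rewrite (Hs j i) by auto. auto. }
 assert (E3: rsum (fun i => rsum (fun j => A i j * ((g i - g j) * (Y j - Y i))) n) n =
   rsum (fun i => rsum (fun j => g i * (A i j * (Y j - Y i))) n + rsum (fun j => g j * (A i j * (Y i - Y j))) n) n).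
 { apply rsum_ext. intros. rewrite <- rsum_plus. apply rsum_ext. intros. ring. }
 rewrite E3, rsum_plus, E1, <- E2. fold L. ring. Qed.

Definition yv s (x : nat -> R -> R) j t := sat (s j) (x j t).

Lemma rhs_weighted N s alpha x (g : nat -> R) t :
  (forall i j, (i < N)%nat -> (j < N)%nat -> alpha i j t = alpha j i t) ->
  2 * rsum (fun i => g i * rhs N s alpha x i t) N =
  rsum (fun i => rsum (fun j => alpha i j t * ((g i - g j) * (yv s x j t - yv s x i t))) N) N.
Proof. intros. unfold rhs. apply (dbl (fun i j => alpha i j t) g (fun j => yv s x j t)). auto. Qed.

Lemma wsum_int N s alpha amax t0 x (g : nat -> R) u t : Hyp N s alpha amax t0 x -> t0 <= u <= t ->
  ex_RInt (fun τ => rsum (fun i => g i * rhs N s alpha x i τ) N) u t /\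
  rsum (fun i => g i * (x i t - x i u)) N = RInt (fun τ => rsum (fun i => g i * rhs N s alpha x i τ) N) u t.
Proof. intros H Hu.
 destruct (rsum_RInt (fun i τ => g i * rhs N s alpha x i τ) N u t) as [E1 E2].
 { intros. apply exRI_scal. apply (sol_int _ _ _ _ _ _ i u t H H0 Hu). }
 split; auto. rewrite E2. apply rsum_ext. intros.
 destruct (sol_int _ _ _ _ _ _ i u t H H0 Hu) as [F1 F2]. rewrite F2, RI_scal; auto. Qed.

Lemma conservation N s alpha amax t0 x t : Hyp N s alpha amax t0 x -> t0 <= t ->
  rsum (fun i => x i t) N = rsum (fun i => x i t0) N.
Proof. intros H Ht. pose proof H as (Hs & Hsym & Ha & Hamax & Ht0 & Hsol).
 destruct (wsum_int N s alpha amax t0 x (fun _ => 1) t0 t H ltac:(lra)) as [E1 E2].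
 assert (Z: RInt (fun τ => rsum (fun i => 1 * rhs N s alpha x i τ) N) t0 t = 0).
 { transitivity (RInt (fun _ => 0) t0 t). 2: rewrite RI_const; apply Rmult_0_r.
   apply RInt_ext. intros τ Hτ. rewrite Rmin_left, Rmax_right in Hτ by lra.
   assert (2 * rsum (fun i => 1 * rhs N s alpha x i τ) N = 0).
   { rewrite rhs_weighted. 2: intros; apply Hsym; auto; lra.
     transitivity (rsum (fun _ => 0) N). 2: rewrite rsum_const; ring.
     apply rsum_ext; intros.
     transitivity (rsum (fun _ => 0) N). 2: rewrite rsum_const; ring.
     apply rsum_ext; intros. ring. }
   lra. }
 rewrite Z in E2. rewrite <- (Rplus_0_r (rsum (fun i => x i t0) N)), <- E2, <- rsum_plus.
 apply rsum_ext. intros. ring. Qed.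

Lemma quad_mono (f : R -> R) t0 C : 0 <= C ->
  (forall t h, t0 <= t -> 0 <= h -> f (t + h) <= f t + C * h * h) ->
  forall t1 t2, t0 <= t1 <= t2 -> f t2 <= f t1.
Proof. intros HC Hf t1 t2 Ht.
 assert (Hn: forall n : nat, (0 < n)%nat -> f t2 <= f t1 + C * (t2 - t1) * (t2 - t1) / INR n).
 { intros n Hn. set (d := (t2 - t1) / INR n).
   assert (Hpos: 0 < INR n) by (apply lt_0_INR; auto).
   assert (Hd: 0 <= d) by (unfold d; apply Rdiv_le_0_compat; lra).
   assert (Hk: forall k : nat, f (t1 + INR k * d) <= f t1 + INR k * (C * d * d)).
   { induction k. simpl. rewrite Rmult_0_l, Rplus_0_r. lra.
     rewrite S_INR. replace (t1 + (INR k + 1) * d) with ((t1 + INR k * d) + d) by ring.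
     eapply Rle_trans. apply Hf; auto. pose proof (pos_INR k). nra. nra. }
   specialize (Hk n). replace (t1 + INR n * d) with t2 in Hk by (unfold d; field; lra).
   replace (C * (t2 - t1) * (t2 - t1) / INR n) with (INR n * (C * d * d)) by (unfold d; field; lra). auto. }
 destruct (Rle_dec (f t2) (f t1)) as [|Hlt]; auto. exfalso.
 assert (Hg: 0 < f t2 - f t1) by lra.
 destruct (INR_unbounded (C * (t2 - t1) * (t2 - t1) / (f t2 - f t1))) as [n Hn'].
 assert (Hn0: (0 < n)%nat).
 { destruct n. simpl in Hn'. assert (0 <= C * (t2 - t1) * (t2 - t1) / (f t2 - f t1)).
   apply Rdiv_le_0_compat; try lra. apply Rmult_le_pos; try nra. lra. lia. }
 specialize (Hn n Hn0). assert (Hpos: 0 < INR n) by (apply lt_0_INR; auto).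
 assert (C * (t2 - t1) * (t2 - t1) < INR n * (f t2 - f t1)).
 { apply (Rmult_lt_compat_r (f t2 - f t1)) in Hn'; auto. unfold Rdiv in Hn'.
   rewrite Rmult_assoc, Rinv_l, Rmult_1_r in Hn' by lra. lra. }
 assert (C * (t2 - t1) * (t2 - t1) / INR n < f t2 - f t1).
 { apply (Rmult_lt_reg_r (INR n)); auto. unfold Rdiv. rewrite Rmult_assoc, Rinv_l by lra. lra. }
 lra. Qed.

Definition Hf N (x : nat -> R -> R) th t := rsum (fun i => Rmax 0 (x i t - th)) N.

Lemma term_bound (a amax P Yi Yj Zi Zj e : R) : 0 <= a <= amax -> 0 <= e ->
  (P = 0 \/ (P = 1 /\ Zj <= Zi) \/ (P = -1 /\ Zi <= Zj)) ->
  Rabs (Yi - Zi) <= e -> Rabs (Yj - Zj) <= e ->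
  a * (P * (Yj - Yi)) <= amax * (2 * e).
Proof. intros Ha He HP H1 H2. apply absle in H1. apply absle in H2.
 destruct HP as [->|[[-> HZ]|[-> HZ]]]; nra. Qed.

Lemma H_step N s alpha amax t0 x K th t h : Hyp N s alpha amax t0 x -> 0 <= K ->
  (forall i t, (i < N)%nat -> 0 <= t -> Rabs (rhs N s alpha x i t) <= K) ->
  (forall i, (i < N)%nat -> -s i <= th <= s i) -> t0 <= t -> 0 <= h ->
  Hf N x th (t + h) <= Hf N x th t + (INR N * INR N * amax * K) * h * h.
Proof. intros H HK0 HK Hth Ht Hh. pose proof H as (Hs & Hsym & Ha & Hamax & Ht0 & Hsol).
 set (g := fun i => if Rle_dec th (x i (t + h)) then 1 else 0).
 assert (S1: Hf N x th (t + h) <= Hf N x th t + rsum (fun i => g i * (x i (t + h) - x i t)) N).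
 { unfold Hf. rewrite <- rsum_plus. apply rsum_le. intros i Hi. unfold g, Rmax.
   destruct (Rle_dec th (x i (t + h))); dRle; lra. }
 destruct (wsum_int N s alpha amax t0 x g t (t + h) H ltac:(lra)) as [E1 E2].
 rewrite E2 in S1.
 assert (S3: RInt (fun τ => rsum (fun i => g i * rhs N s alpha x i τ) N) t (t + h) <=
             (t + h - t) * (INR N * INR N * amax * K * h)).
 { apply RI_le_const; auto; try lra. intros τ Hτ.
   assert (Hsymτ: forall i j, (i < N)%nat -> (j < N)%nat -> alpha i j τ = alpha j i τ)
     by (intros; apply Hsym; auto; lra).
   pose proof (rhs_weighted N s alpha x g τ Hsymτ) as W.
   assert (B: rsum (fun i => rsum (fun j => alpha i j τ * ((g i - g j) * (yv s x j τ - yv s x i τ))) N) N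
              <= rsum (fun i => rsum (fun j => amax * (2 * (K * h))) N) N).
   { apply rsum_le; intros i Hi. apply rsum_le; intros j Hj.
     assert (Lip: forall k, (k < N)%nat -> Rabs (yv s x k τ - yv s x k (t + h)) <= K * h).
     { intros k Hk. unfold yv. eapply Rle_trans. apply sat_lip; auto.
       rewrite Rabs_minus_sym. eapply Rle_trans. apply (x_lip N s alpha amax t0 x K k τ (t + h)); auto; lra.
       apply Rmult_le_compat_l; lra. }
     apply term_bound with (Zi := yv s x i (t + h)) (Zj := yv s x j (t + h)); auto.
     - apply Ha; auto; lra.
     - apply Rmult_le_pos; lra.
     - unfold g. pose proof (Hth i Hi). pose proof (Hth j Hj). unfold yv.
       destruct (Rle_dec th (x i (t + h))); destruct (Rle_dec th (x j (t + h))).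
       + left; ring.
       + right; left; split; [ring|]. apply Rle_trans with th.
         apply sat_le; auto; lra. apply sat_ge; auto; lra.
       + right; right; split; [ring|]. apply Rle_trans with th.
         apply sat_le; auto; lra. apply sat_ge; auto; lra.
       + left; ring. }
   rewrite rsum_const in B. rewrite rsum_const in B. lra. }
 lra. Qed.

Lemma H_mono N s alpha amax t0 x th t1 t2 : Hyp N s alpha amax t0 x ->
  (forall i, (i < N)%nat -> -s i <= th <= s i) -> t0 <= t1 <= t2 -> Hf N x th t2 <= Hf N x th t1.
Proof. intros H Hth Ht. destruct (rhs_bound N s alpha amax t0 x H) as [K [HK0 HK]].
 pose proof H as (Hs & Hsym & Ha & Hamax & Ht0 & Hsol).
 apply (quad_mono (Hf N x th) t0 (INR N * INR N * amax * K)); auto.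
 apply Rmult_le_pos; auto. apply Rmult_le_pos; auto. apply Rmult_le_pos; apply pos_INR.
 intros. apply (H_step N s alpha amax t0 x K th t h); auto. Qed.

Lemma rsum_le_one f n p : (forall i, (i < n)%nat -> f i <= 0) -> (p < n)%nat -> rsum f n <= f p.
Proof. intros H Hp. pose proof (rsum_ge_term (fun i => - f i) n p) as G.
 rewrite <- (Rmult_1_l (f p)). replace (rsum f n) with (- rsum (fun i => - f i) n).
 assert (- f p <= rsum (fun i => - f i) n) by (apply G; auto; intros; specialize (H i H0); lra). lra.
 replace (fun i => - f i) with (fun i => (-1) * f i) by (apply functional_extensionality; intros; ring).
 rewrite rsum_scal. ring. Qed.

Definition ind (U : nat -> bool) i : R := if U i then 1 else 0.

Lemma cut N s alpha amax t0 x (U : nat -> bool) p q T : Hyp N s alpha amax t0 x -> t0 <= T ->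
  (p < N)%nat -> (q < N)%nat -> U p = true -> U q = false -> integral_diverges (alpha p q) ->
  (exists d, 0 < d /\ forall t, T <= t -> yv s x q t + d <= yv s x p t) ->
  (forall t i j, T <= t -> (i < N)%nat -> (j < N)%nat -> U i = true -> U j = false -> yv s x j t <= yv s x i t) ->
  forall M, exists t, T <= t /\ rsum (fun i => ind U i * x i t) N < M.
Proof. intros H HT Hp Hq Up Uq Hdiv [d [Hd Hgap]] Hord M.
 pose proof H as (Hs & Hsym & Ha & Hamax & Ht0 & Hsol).
 assert (Hpq: p <> q) by (intro; subst; congruence).
 set (G0 := rsum (fun i => ind U i * x i T) N).
 set (M' := amax * T + Rabs ((G0 - M) / d) + 1).
 destruct (Hdiv M') as [T' [pr [HT'0 HT']]]. rewrite <- RInt_Reals in HT'.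
 assert (Ex0: ex_RInt (alpha p q) 0 T') by (apply ex_RInt_Reals_1; auto).
 assert (Bnd: forall a, 0 <= a -> a <= T' -> RInt (alpha p q) 0 a <= amax * a).
 { intros a Ha0 HaT. replace (amax * a) with ((a - 0) * amax) by ring.
   apply RI_le_const; auto. apply (exRI_sub _ 0 T'); try lra; auto. intros; apply Ha; auto; lra. }
 assert (HTT: T < T').
 { destruct (Rlt_dec T T'); auto. exfalso. pose proof (Bnd T' ltac:(lra) ltac:(lra)).
   pose proof (Rabs_pos ((G0 - M) / d)). assert (amax * T' <= amax * T) by (apply Rmult_le_compat_l; lra).
   unfold M' in HT'. lra. }
 exists T'. split; [lra|].
 destruct (wsum_int N s alpha amax t0 x (ind U) T T' H ltac:(lra)) as [E1 E2].
 assert (ExTT: ex_RInt (alpha p q) T T') by (apply (exRI_sub _ 0 T'); try lra; auto).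
 assert (Ch: RInt (alpha p q) 0 T + RInt (alpha p q) T T' = RInt (alpha p q) 0 T').
 { apply RI_chasles. apply (exRI_sub _ 0 T'); try lra; auto. auto. }
 assert (BT: RInt (alpha p q) 0 T <= amax * T) by (apply Bnd; lra).
 assert (Pt: forall τ, T <= τ -> rsum (fun i => ind U i * rhs N s alpha x i τ) N <= - d * alpha p q τ).
 { intros τ Hτ.
   assert (Hsymτ: forall i j, (i < N)%nat -> (j < N)%nat -> alpha i j τ = alpha j i τ)
     by (intros; apply Hsym; auto; lra).
   pose proof (rhs_weighted N s alpha x (ind U) τ Hsymτ) as W.
   set (F := fun i j => alpha i j τ * ((ind U i - ind U j) * (yv s x j τ - yv s x i τ))).
   assert (Fneg: forall i j, (i < N)%nat -> (j < N)%nat -> F i j <= 0).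
   { intros i j Hi Hj. unfold F, ind. pose proof (Ha i j τ Hi Hj ltac:(lra)).
     destruct (U i) eqn:Ui; destruct (U j) eqn:Uj.
     - lra.
     - pose proof (Hord τ i j Hτ Hi Hj Ui Uj). nra.
     - pose proof (Hord τ j i Hτ Hj Hi Uj Ui). nra.
     - lra. }
   assert (Tot: rsum (fun i => rsum (fun j => F i j) N) N <= F p q + F q p).
   { apply Rle_trans with (rsum (fun j => F p j) N + rsum (fun j => F q j) N).
     - apply (rsum_le_two (fun i => rsum (fun j => F i j) N)); auto.
       intros i Hi. apply Rle_trans with (rsum (fun _ => 0) N). apply rsum_le; auto.
       rewrite rsum_const; lra.
     - apply Rplus_le_compat; apply rsum_le_one; auto. }
   assert (Fpq: F p q <= - d * alpha p q τ).
   { unfold F, ind. rewrite Up, Uq. pose proof (Hgap τ Hτ). pose proof (Ha p q τ Hp Hq ltac:(lra)). nra. }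
   assert (Fqp: F q p <= - d * alpha p q τ).
   { unfold F, ind. rewrite Up, Uq. rewrite (Hsym q p τ) by (auto; lra).
     pose proof (Hgap τ Hτ). pose proof (Ha p q τ Hp Hq ltac:(lra)). nra. }
   assert (W': 2 * rsum (fun i => ind U i * rhs N s alpha x i τ) N = rsum (fun i => rsum (fun j => F i j) N) N)
     by (rewrite W; reflexivity).
   lra. }
 assert (Int: RInt (fun τ => rsum (fun i => ind U i * rhs N s alpha x i τ) N) T T' <=
              RInt (fun τ => - d * alpha p q τ) T T').
 { apply RInt_le; auto. lra. apply exRI_scal; auto. intros; apply Pt; lra. }
 rewrite RI_scal in Int by auto. rewrite <- E2 in Int.
 assert (Eq: rsum (fun i => ind U i * x i T') N = G0 + rsum (fun i => ind U i * (x i T' - x i T)) N).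
 { unfold G0. rewrite <- rsum_plus. apply rsum_ext. intros; ring. }
 rewrite Eq.
 assert (R1: (G0 - M) / d <= Rabs ((G0 - M) / d)) by apply Rle_abs.
 assert (R2: G0 - M <= d * Rabs ((G0 - M) / d)).
 { assert (Q: d * ((G0 - M) / d) = G0 - M) by (field; lra).
   pose proof (Rmult_le_compat_l d _ _ ltac:(lra) R1). lra. }
 unfold M' in HT'. nra. Qed.

Lemma reach_lt N E i j : reach N E i j -> (i < N)%nat /\ (j < N)%nat.
Proof. induction 1; split; try tauto. Qed.

Lemma cross N E (U : nat -> bool) i j : reach N E i j -> U i = true -> U j = false ->
  exists a b, (a < N)%nat /\ (b < N)%nat /\ U a = true /\ U b = false /\ E a b.
Proof. induction 1; intros Ui Uk. congruence.
 destruct (U j) eqn:Uj.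
 - exists j, k. apply reach_lt in H. repeat split; tauto.
 - apply IHreach; auto. Qed.

Lemma mono_inf (f : R -> R) t0 : (forall t1 t2, t0 <= t1 <= t2 -> f t2 <= f t1) -> (forall t, t0 <= t -> 0 <= f t) ->
  exists h, (forall t, t0 <= t -> h <= f t) /\ forall eta, 0 < eta -> exists T, t0 <= T /\ forall t, T <= t -> f t <= h + eta.
Proof. intros Hm Hp.
 set (E := fun r => exists t, t0 <= t /\ r = - f t).
 assert (Hb: bound E). { exists 0. intros r [t [Ht ->]]. pose proof (Hp t Ht). lra. }
 assert (Hne: exists r, E r). { exists (- f t0). exists t0. split; auto; lra. }
 destruct (completeness E Hb Hne) as [l [Hub Hlub]].
 exists (- l). split.
 - intros t Ht. assert (- f t <= l) by (apply Hub; exists t; auto). lra.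
 - intros eta Heta. destruct (Rle_dec t0 t0) as [_|]; [|lra].
   assert (exists t, t0 <= t /\ l - eta < - f t).
   { apply NNPP. intro Hn. assert (l <= l - eta). apply Hlub. intros r [t [Ht ->]].
     apply Rnot_lt_le. intro. apply Hn. exists t; auto. lra. }
   destruct H as [T [HT HlT]]. exists T. split; auto. intros t Ht. pose proof (Hm T t ltac:(lra)). lra. Qed.

Lemma tent_nonneg x th dl : 0 < dl ->
  0 <= Rmax 0 (x - th) - 2 * Rmax 0 (x - (th + dl)) + Rmax 0 (x - (th + 2 * dl)).
Proof. intros. unfold Rmax. dRle; lra. Qed.

Lemma tent_big x th dl : 0 < dl -> th + dl / 2 <= x <= th + 3 * dl / 2 ->
  dl / 2 <= Rmax 0 (x - th) - 2 * Rmax 0 (x - (th + dl)) + Rmax 0 (x - (th + 2 * dl)).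
Proof. intros. unfold Rmax. dRle; lra. Qed.

Lemma Hf_lip N x th th' t : th <= th' -> Hf N x th t - Hf N x th' t <= INR N * (th' - th).
Proof. intros. unfold Hf. rewrite <- rsum_minus, <- rsum_const. apply rsum_le. intros.
 unfold Rmax. dRle; lra. Qed.

Lemma Hf_anti N x th th' t : th <= th' -> Hf N x th' t <= Hf N x th t.
Proof. intros. unfold Hf. apply rsum_le. intros. unfold Rmax. dRle; lra. Qed.

Lemma Hf_nonneg N x th t : 0 <= Hf N x th t.
Proof. unfold Hf. apply rsum_nonneg. intros. unfold Rmax. dRle; lra. Qed.

Lemma pigeon (D : nat -> R) n : (forall k, (k < n)%nat -> 1/2 <= D k - D (S k)) -> INR n / 2 <= D 0%nat - D n.
Proof. induction n; intros H. simpl. lra.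
 assert (INR n / 2 <= D 0%nat - D n) by (apply IHn; intros; apply H; lia).
 assert (1/2 <= D n - D (S n)) by (apply H; lia). rewrite S_INR. lra. Qed.

Lemma band N s alpha amax t0 x a d : Hyp N s alpha amax t0 x -> a < d ->
  (forall i, (i < N)%nat -> -s i <= a /\ d <= s i) ->
  exists a' d' T, a <= a' < d' /\ d' <= d /\ t0 <= T /\
    forall t i, T <= t -> (i < N)%nat -> ~ (a' <= x i t <= d').
Proof. intros H Had Hs_ad.
 set (M := (2 * N + 2)%nat).
 assert (HM: 0 < INR M) by (apply lt_0_INR; unfold M; lia).
 set (dl := (d - a) / INR M).
 assert (Hdl: 0 < dl) by (unfold dl; apply Rdiv_lt_0_compat; lra).
 set (th := fun k : nat => a + INR k * dl).
 assert (thS: forall k, th (S k) = th k + dl) by (intros; unfold th; rewrite S_INR; ring).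
 assert (thM: th M = d) by (unfold th, dl; field; lra).
 assert (thr: forall k, (k <= M)%nat -> a <= th k <= d).
 { intros k Hk. unfold th. split. pose proof (pos_INR k). nra.
   rewrite <- thM. unfold th. apply le_INR in Hk. nra. }
 assert (Hmono: forall k t1 t2, (k <= M)%nat -> t0 <= t1 <= t2 -> Hf N x (th k) t2 <= Hf N x (th k) t1).
 { intros. apply (H_mono N s alpha amax t0 x); auto. intros i Hi. destruct (Hs_ad i Hi). pose proof (thr k H0). lra. }
 assert (Hex: forall k, exists h, (k <= M)%nat -> (forall t, t0 <= t -> h <= Hf N x (th k) t) /\
     forall eta, 0 < eta -> exists T, t0 <= T /\ forall t, T <= t -> Hf N x (th k) t <= h + eta).
 { intros k. destruct (Compare_dec.le_lt_dec k M).
   - destruct (mono_inf (Hf N x (th k)) t0) as [h Hh]. intros; apply Hmono; auto.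
     intros; apply Hf_nonneg. exists h; auto.
   - exists 0. intros; lia. }
 set (h := fun k => proj1_sig (constructive_indefinite_description _ (Hex k))).
 assert (Hh: forall k, (k <= M)%nat -> (forall t, t0 <= t -> h k <= Hf N x (th k) t) /\
     forall eta, 0 < eta -> exists T, t0 <= T /\ forall t, T <= t -> Hf N x (th k) t <= h k + eta).
 { intros k Hk. unfold h. destruct (constructive_indefinite_description _ (Hex k)). simpl. auto. }
 pose proof H as (Hs & Hsym & Ha & Hamax & Ht0 & Hsol).
 set (D := fun k => (h k - h (S k)) / dl).
 assert (D0: D 0%nat <= INR N).
 { unfold D. apply (Rmult_le_reg_r dl); auto. unfold Rdiv. rewrite Rmult_assoc, Rinv_l, Rmult_1_r by lra.
   apply Rnot_lt_le. intro Hc.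
   destruct (Hh 0%nat ltac:(lia)) as [A0 _]. destruct (Hh 1%nat ltac:(unfold M; lia)) as [_ B1].
   destruct (B1 ((h 0%nat - h 1%nat - INR N * dl) / 2) ltac:(lra)) as [T [HT HT']].
   pose proof (A0 T HT). pose proof (HT' T ltac:(lra)).
   pose proof (Hf_lip N x (th 0%nat) (th 1%nat) T ltac:(rewrite thS; lra)). rewrite thS in H2.
   replace (th 0%nat + dl - th 0%nat) with dl in H2 by ring. rewrite thS in H1. lra. }
 assert (DM: 0 <= D (M - 1)%nat).
 { unfold D. apply Rdiv_le_0_compat; auto. replace (S (M - 1)) with M by (unfold M; lia).
   apply Rnot_lt_le. intro Hc.
   destruct (Hh M ltac:(lia)) as [AM _]. destruct (Hh (M-1)%nat ltac:(lia)) as [_ B1].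
   destruct (B1 ((h M - h (M - 1)%nat) / 2) ltac:(lra)) as [T [HT HT']].
   pose proof (AM T HT). pose proof (HT' T ltac:(lra)).
   pose proof (Hf_anti N x (th (M-1)%nat) (th M) T).
   assert (th (M - 1)%nat <= th M). { replace M with (S (M - 1)) at 2 by (unfold M; lia). rewrite thS; lra. }
   specialize (H2 H3). lra. }
 assert (Hk: exists k, (k < M - 1)%nat /\ D k - D (S k) < 1/2).
 { apply NNPP. intro Hn. assert (P: INR (M - 1) / 2 <= D 0%nat - D (M - 1)%nat).
   { apply pigeon. intros k Hk. apply Rnot_lt_le. intro. apply Hn. exists k; auto. }
   assert (IM: INR (M - 1) = 2 * INR N + 1).
   { replace (M - 1)%nat with (2 * N + 1)%nat by (unfold M; lia). rewrite plus_INR, mult_INR. simpl. ring. }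
   rewrite IM in P. lra. }
 destruct Hk as [k [Hk Hkd]].
 set (tau := D k - D (S k)).
 set (eta := dl * (1/2 - tau) / 4).
 assert (Heta: 0 < eta) by (unfold eta; assert (0 < 1/2 - tau) by (unfold tau; lra); apply Rdiv_lt_0_compat; [nra|lra]).
 destruct (Hh k ltac:(lia)) as [_ Bk]. destruct (Hh (S (S k)) ltac:(lia)) as [_ Bk2].
 destruct (Hh (S k) ltac:(lia)) as [Ak1 _].
 destruct (Bk eta Heta) as [T1 [HT1 HT1']]. destruct (Bk2 eta Heta) as [T2 [HT2 HT2']].
 exists (th (S k) - dl / 2), (th (S k) + dl / 2), (Rmax T1 T2).
 assert (Rk2: (S (S k) <= M)%nat) by lia.
 pose proof (thr k ltac:(lia)). pose proof (thr _ Rk2). rewrite !thS in H1.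
 split; [|split; [|split]].
 - rewrite thS. lra.
 - rewrite thS. lra.
 - unfold Rmax; destruct (Rle_dec T1 T2); lra.
 - intros t i Ht Hi Hin.
   assert (HT1t: T1 <= t) by (unfold Rmax in Ht; destruct (Rle_dec T1 T2); lra).
   assert (HT2t: T2 <= t) by (unfold Rmax in Ht; destruct (Rle_dec T1 T2); lra).
   specialize (HT1' t HT1t). specialize (HT2' t HT2t). specialize (Ak1 t ltac:(lra)).
   rewrite !thS in HT2'. rewrite thS in Ak1.
   assert (Tsum: Hf N x (th k) t - 2 * Hf N x (th k + dl) t + Hf N x (th k + dl + dl) t =
      rsum (fun j => Rmax 0 (x j t - th k) - 2 * Rmax 0 (x j t - (th k + dl)) + Rmax 0 (x j t - (th k + 2 * dl))) N).
   { unfold Hf. rewrite rsum_plus, rsum_minus, rsum_scal.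
     replace (th k + 2 * dl) with (th k + dl + dl) by ring. auto. }
   assert (Tge: dl / 2 <= rsum (fun j => Rmax 0 (x j t - th k) - 2 * Rmax 0 (x j t - (th k + dl)) + Rmax 0 (x j t - (th k + 2 * dl))) N).
   { eapply Rle_trans. 2: apply (rsum_ge_term _ N i); auto.
     apply tent_big; auto. rewrite thS in Hin. lra.
     intros; apply tent_nonneg; auto. }
   assert (Etau: tau * dl = h k - 2 * h (S k) + h (S (S k))).
   { unfold tau, D. field. lra. }
   unfold eta in *. nra. Qed.

Lemma lipcont (f : R -> R) a t0 K : t0 < a -> 0 <= K ->
  (forall u v, t0 <= u <= v -> Rabs (f v - f u) <= K * (v - u)) -> continuity_pt f a.
Proof. intros Ha HK Hl. unfold continuity_pt, continue_in, limit1_in, limit_in. simpl. unfold R_dist.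
 intros eps Heps. exists (Rmin (a - t0) (eps / (K + 1))). split.
 - apply Rmin_pos; try lra. apply Rdiv_lt_0_compat; lra.
 - intros z [_ Hz]. assert (Hz1: Rabs (z - a) < a - t0) by (eapply Rlt_le_trans; [apply Hz| apply Rmin_l]).
   assert (Hz2: Rabs (z - a) < eps / (K + 1)) by (eapply Rlt_le_trans; [apply Hz| apply Rmin_r]).
   assert (Hk: K * Rabs (z - a) < eps).
   { apply Rle_lt_trans with ((K + 1) * Rabs (z - a)). pose proof (Rabs_pos (z - a)). nra.
     apply (Rmult_lt_compat_l (K + 1)) in Hz2; [|lra]. replace ((K + 1) * (eps / (K + 1))) with eps in Hz2 by (field; lra). auto. }
   destruct (Rle_dec a z).
   + rewrite Rabs_right in Hz1, Hk by lra. pose proof (Hl a z ltac:(lra)). lra.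
   + rewrite Rabs_left in Hz1, Hk by lra. pose proof (Hl z a ltac:(lra)). rewrite Rabs_minus_sym. lra. Qed.

Lemma persist N s alpha amax t0 x i T a' d' : Hyp N s alpha amax t0 x -> t0 < T -> (i < N)%nat -> a' <= d' ->
  (forall t, T <= t -> ~ (a' <= x i t <= d')) ->
  (d' < x i T -> forall t, T <= t -> d' < x i t) /\ (x i T < a' -> forall t, T <= t -> x i t < a').
Proof. intros H HT Hi Had Hno. destruct (rhs_bound N s alpha amax t0 x H) as [K [HK0 HK]].
 set (m := (a' + d') / 2).
 assert (Lx: forall u v, t0 <= u <= v -> Rabs (x i v - x i u) <= K * (v - u)).
 { intros. apply (x_lip N s alpha amax t0 x K); auto. }
 split.
 - intros HTd t Ht. apply Rnot_le_lt. intro Hle.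
   assert (Hlt: x i t < a') by (destruct (Rlt_dec (x i t) a'); auto; exfalso; apply (Hno t Ht); lra).
   assert (Htt: T < t) by (destruct (Req_dec T t); [subst; lra| lra]).
   destruct (Ranalysis5.IVT_interv (fun z => m - x i z) T t) as [z [Hz Hfz]].
   + intros z Hz. apply (lipcont _ z t0 K); try lra; auto. intros u v Huv.
     replace (m - x i v - (m - x i u)) with (- (x i v - x i u)) by ring. rewrite Rabs_Ropp. auto.
   + auto.
   + unfold m. lra.
   + unfold m. lra.
   + apply (Hno z ltac:(lra)). unfold m in Hfz. lra.
 - intros HTa t Ht. apply Rnot_le_lt. intro Hle.
   assert (Hlt: d' < x i t) by (destruct (Rlt_dec d' (x i t)); auto; exfalso; apply (Hno t Ht); lra).
   assert (Htt: T < t) by (destruct (Req_dec T t); [subst; lra| lra]).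
   destruct (Ranalysis5.IVT_interv (fun z => x i z - m) T t) as [z [Hz Hfz]].
   + intros z Hz. apply (lipcont _ z t0 K); try lra; auto. intros u v Huv.
     replace (x i v - m - (x i u - m)) with (x i v - x i u) by ring. auto.
   + auto.
   + unfold m. lra.
   + unfold m. lra.
   + apply (Hno z ltac:(lra)). unfold m in Hfz. lra.
Qed.

Lemma dichot N s alpha amax t0 x T a' d' : Hyp N s alpha amax t0 x -> integrally_connected N alpha ->
  t0 < T -> a' < d' -> (forall i, (i < N)%nat -> -s i <= a' /\ d' <= s i) ->
  (forall t i, T <= t -> (i < N)%nat -> ~ (a' <= x i t <= d')) ->
  (forall i t, (i < N)%nat -> T <= t -> d' < x i t) \/ (forall i t, (i < N)%nat -> T <= t -> x i t < a').
Proof. intros H Hcon HT Had Hb Hno. pose proof H as (Hs & Hsym & Ha & Hamax & Ht0 & Hsol).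
 set (U := fun i => if Rlt_dec d' (x i T) then true else false).
 assert (Per: forall i, (i < N)%nat -> (U i = true -> forall t, T <= t -> d' < x i t) /\ (U i = false -> forall t, T <= t -> x i t < a')).
 { intros i Hi. destruct (persist N s alpha amax t0 x i T a' d' H HT Hi ltac:(lra)) as [P1 P2].
   intros; apply Hno; auto. unfold U. destruct (Rlt_dec d' (x i T)); split; intros E; try discriminate.
   apply P1; auto. apply P2. assert (~ (a' <= x i T <= d')) by (apply Hno; auto; lra). lra. }
 destruct (classic (forall i, (i < N)%nat -> U i = true)) as [Hall|Hnall].
 { left. intros i t Hi Ht. apply (proj1 (Per i Hi)); auto. }
 destruct (classic (forall i, (i < N)%nat -> U i = false)) as [Hnone|Hsome].
 { right. intros i t Hi Ht. apply (proj2 (Per i Hi)); auto. }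
 exfalso.
 apply not_all_ex_not in Hnall. destruct Hnall as [q Hq]. apply imply_to_and in Hq. destruct Hq as [Hq Uq].
 apply Bool.not_true_is_false in Uq.
 apply not_all_ex_not in Hsome. destruct Hsome as [p Hp]. apply imply_to_and in Hp. destruct Hp as [Hp Up].
 apply Bool.not_false_is_true in Up.
 destruct (cross N _ U p q (Hcon p q Hp Hq) Up Uq) as [a [b [Ha' [Hb' [Ua [Ub Eab]]]]]].
 assert (Yhi: forall i t, (i < N)%nat -> U i = true -> T <= t -> d' <= yv s x i t).
 { intros i t Hi Ui Ht. unfold yv. destruct (Hb i Hi). apply sat_ge; auto. lra.
   apply Rlt_le. apply (proj1 (Per i Hi)); auto. }
 assert (Ylo: forall i t, (i < N)%nat -> U i = false -> T <= t -> yv s x i t <= a').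
 { intros i t Hi Ui Ht. unfold yv. destruct (Hb i Hi). apply sat_le; auto. lra.
   apply Rlt_le. apply (proj2 (Per i Hi)); auto. }
 destruct (cut N s alpha amax t0 x U a b T H ltac:(lra) Ha' Hb' Ua Ub Eab) with (M := - INR N * Rabs d' - 1)
   as [t [Ht Hsum]].
 - exists (d' - a'). split. lra. intros t Ht. pose proof (Yhi a t Ha' Ua Ht). pose proof (Ylo b t Hb' Ub Ht). lra.
 - intros t i j Ht Hi Hj Ui Uj. pose proof (Yhi i t Hi Ui Ht). pose proof (Ylo j t Hj Uj Ht). lra.
 - assert (- INR N * Rabs d' <= rsum (fun i => ind U i * x i t) N).
   { replace (- INR N * Rabs d') with (rsum (fun _ => - Rabs d') N) by (rewrite rsum_const; ring).
     apply rsum_le. intros i Hi. unfold ind. destruct (U i) eqn:Ui.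
     - pose proof (proj1 (Per i Hi) Ui t Ht). pose proof (Rle_abs (- d')). rewrite Rabs_Ropp in H1. lra.
     - pose proof (Rabs_pos d'). lra. }
   lra. Qed.

Lemma rsum_lt f g n : (0 < n)%nat -> (forall i, (i < n)%nat -> f i < g i) -> rsum f n < rsum g n.
Proof. destruct n. lia. intros _ H. simpl. assert (rsum f n <= rsum g n) by (apply rsum_le; intros; apply Rlt_le, H; lia).
 assert (f n < g n) by (apply H; lia). lra. Qed.

Lemma other_side_up f n e i : rsum f n = 0 -> 0 < e -> (forall j, (j < n)%nat -> - e < f j) -> (i < n)%nat -> f i < INR n * e.
Proof. intros Hs He Hj Hi. assert (f i + e <= rsum (fun j => f j + e) n).
 { apply (rsum_ge_term (fun j => f j + e)); auto. intros; specialize (Hj i0 H); lra. }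
 rewrite rsum_plus, rsum_const, Hs in H. lra. Qed.

Lemma other_side_dn f n e i : rsum f n = 0 -> 0 < e -> (forall j, (j < n)%nat -> f j < e) -> (i < n)%nat -> - (INR n * e) < f i.
Proof. intros Hs He Hj Hi. assert (e - f i <= rsum (fun j => e - f j) n).
 { apply (rsum_ge_term (fun j => e - f j)); auto. intros; specialize (Hj i0 H); lra. }
 rewrite rsum_minus, rsum_const, Hs in H. lra. Qed.

Lemma smin_ex (s : nat -> R) N : (forall i, (i < N)%nat -> 0 < s i) -> exists m, 0 < m /\ forall i, (i < N)%nat -> m <= s i.
Proof. induction N; intros H. exists 1. split. lra. intros; lia.
 destruct IHN as [m [Hm Hm']]; [intros; apply H; lia|].
 exists (Rmin m (s N)). split. { apply Rmin_pos; [auto| apply H; lia]. }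
 intros i Hi. destruct (Nat.eq_dec i N). subst. apply Rmin_r.
 eapply Rle_trans. apply Rmin_l. apply Hm'. lia. Qed.

Lemma if_dir N s alpha amax t0 x : Hyp N s alpha amax t0 x -> integrally_connected N alpha -> (0 < N)%nat ->
  (forall i, (i < N)%nat -> / INR N * Rabs (rsum (fun k => x k t0) N) <= s i) ->
  consensus N x.
Proof. intros H Hcon HN Hc. pose proof H as (Hs & Hsym & Ha & Hamax & Ht0 & Hsol).
 set (S := rsum (fun k => x k t0) N). set (c := / INR N * S).
 assert (HNp: 0 < INR N) by (apply lt_0_INR; auto).
 assert (Sc: S = INR N * c) by (unfold c; field; lra).
 assert (cb: forall i, (i < N)%nat -> - s i <= c <= s i).
 { intros i Hi. specialize (Hc i Hi). fold S in Hc. apply absle. unfold c.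
   pose proof (Rinv_0_lt_compat _ HNp). rewrite Rabs_mult, (Rabs_right (/ INR N)) by lra. auto. }
 destruct (smin_ex s N Hs) as [m [Hm Hm']].
 assert (Cons: forall t, t0 <= t -> rsum (fun i => x i t - c) N = 0).
 { intros t Ht. rewrite rsum_minus, rsum_const. rewrite (conservation N s alpha amax t0 x t H Ht). fold S. lra. }
 assert (Main: forall e, 0 < e -> exists T, forall t i, T <= t -> (i < N)%nat -> Rabs (x i t - c) < INR N * e + e).
 { intros e He. set (e' := Rmin e m). assert (He': 0 < e') by (apply Rmin_pos; auto).
   assert (He'e: e' <= e) by apply Rmin_l. assert (He'm: e' <= m) by apply Rmin_r.
   destruct (Rle_dec 0 c) as [c0|c0].
   - destruct (band N s alpha amax t0 x (c - e') c H ltac:(lra)) as [a' [d' [T1 [Ha1 [Hd1 [HT1 Hno]]]]]].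
     { intros i Hi. pose proof (Hm' i Hi). pose proof (cb i Hi). lra. }
     destruct (dichot N s alpha amax t0 x (T1 + 1) a' d' H Hcon ltac:(lra) ltac:(lra)) as [Up|Dn].
     { intros i Hi. pose proof (Hm' i Hi). pose proof (cb i Hi). lra. }
     { intros; apply Hno; auto; lra. }
     + exists (T1 + 1). intros t i Ht Hi.
       assert (Lo: forall j, (j < N)%nat -> - e < x j t - c) by (intros; pose proof (Up j t H0 Ht); lra).
       pose proof (other_side_up (fun j => x j t - c) N e i (Cons t ltac:(lra)) He Lo Hi). simpl in H0.
       pose proof (Lo i Hi). assert (0 <= INR N * e) by (apply Rmult_le_pos; lra); apply Rabs_def1; lra.
     + exfalso. pose proof (rsum_lt (fun i => x i (T1 + 1)) (fun _ => a') N HN) as L.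
       rewrite rsum_const, (conservation N s alpha amax t0 x) in L by (auto; lra). fold S in L.
       assert (S < INR N * a') by (apply L; intros; apply Dn; auto; lra).
       assert (INR N * a' < INR N * c) by (apply Rmult_lt_compat_l; lra). lra.
   - destruct (band N s alpha amax t0 x c (c + e') H ltac:(lra)) as [a' [d' [T1 [Ha1 [Hd1 [HT1 Hno]]]]]].
     { intros i Hi. pose proof (Hm' i Hi). pose proof (cb i Hi). lra. }
     destruct (dichot N s alpha amax t0 x (T1 + 1) a' d' H Hcon ltac:(lra) ltac:(lra)) as [Up|Dn].
     { intros i Hi. pose proof (Hm' i Hi). pose proof (cb i Hi). lra. }
     { intros; apply Hno; auto; lra. }
     + exfalso. pose proof (rsum_lt (fun _ => d') (fun i => x i (T1 + 1)) N HN) as L.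
       rewrite rsum_const, (conservation N s alpha amax t0 x) in L by (auto; lra). fold S in L.
       assert (INR N * d' < S) by (apply L; intros; apply Up; auto; lra).
       assert (INR N * c < INR N * d') by (apply Rmult_lt_compat_l; lra). lra.
     + exists (T1 + 1). intros t i Ht Hi.
       assert (Hi': forall j, (j < N)%nat -> x j t - c < e) by (intros; pose proof (Dn j t H0 Ht); lra).
       pose proof (other_side_dn (fun j => x j t - c) N e i (Cons t ltac:(lra)) He Hi' Hi). simpl in H0.
       pose proof (Hi' i Hi). assert (0 <= INR N * e) by (apply Rmult_le_pos; lra); apply Rabs_def1; lra. }
 exists c. intros i Hi eps Heps.
 destruct (Main (eps / (INR N + 1))) as [T HT]. apply Rdiv_lt_0_compat; lra.
 exists T. intros t Ht. specialize (HT t i Ht Hi).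
 replace (INR N * (eps / (INR N + 1)) + eps / (INR N + 1)) with eps in HT by (field; lra). auto. Qed.

Lemma ev_all (P : nat -> R -> Prop) N : (forall i, (i < N)%nat -> exists T, forall t, T <= t -> P i t) ->
  exists T, forall t i, T <= t -> (i < N)%nat -> P i t.
Proof. induction N; intros H. exists 0. intros; lia.
 destruct IHN as [T1 H1]; [intros; apply H; lia|].
 destruct (H N ltac:(lia)) as [T2 H2]. exists (Rmax T1 T2). intros t i Ht Hi.
 destruct (Nat.eq_dec i N). subst. apply H2. eapply Rle_trans; [apply Rmax_r|eauto].
 apply H1; [eapply Rle_trans; [apply Rmax_l|eauto]| lia]. Qed.

Lemma argmin_ex (s : nat -> R) N : (0 < N)%nat -> exists p, (p < N)%nat /\ forall i, (i < N)%nat -> s p <= s i.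
Proof. induction N; intros HN. lia. destruct N.
 - exists 0%nat. split. lia. intros. assert (i = 0%nat) by lia. subst; lra.
 - destruct IHN as [p [Hp Hp']]. lia.
   destruct (Rle_dec (s p) (s (S N))).
   + exists p. split. lia. intros. destruct (Nat.eq_dec i (S N)). subst; auto. apply Hp'; lia.
   + exists (S N). split. lia. intros. destruct (Nat.eq_dec i (S N)). subst; lra.
     specialize (Hp' i ltac:(lia)). lra. Qed.

Lemma rsum_ind_not f n p : (p < n)%nat -> rsum (fun i => ind (fun i => negb (Nat.eqb i p)) i * f i) n = rsum f n - f p.
Proof. induction n; intros Hp. lia. simpl. unfold ind at 2. destruct (Nat.eq_dec p n).
 - subst. rewrite Nat.eqb_refl. simpl.
   assert (E: rsum (fun i => ind (fun i => negb (Nat.eqb i n)) i * f i) n = rsum f n).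
   { apply rsum_ext. intros. unfold ind. replace (Nat.eqb i n) with false. simpl. ring.
     symmetry. apply Nat.eqb_neq. lia. }
   rewrite E. ring.
 - replace (Nat.eqb n p) with false by (symmetry; apply Nat.eqb_neq; lia). simpl.
   rewrite IHn by lia. ring. Qed.

Lemma rsum_ind_one f n p : (p < n)%nat -> rsum (fun i => ind (fun i => Nat.eqb i p) i * f i) n = f p.
Proof. induction n; intros Hp. lia. simpl. unfold ind at 2. destruct (Nat.eq_dec p n).
 - subst. rewrite Nat.eqb_refl.
   assert (E: rsum (fun i => ind (fun i => Nat.eqb i n) i * f i) n = 0).
   { transitivity (rsum (fun _ => 0) n). apply rsum_ext. intros. unfold ind. replace (Nat.eqb i n) with false. ring.
     symmetry. apply Nat.eqb_neq. lia. rewrite rsum_const; ring. }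
   rewrite E. ring.
 - replace (Nat.eqb n p) with false by (symmetry; apply Nat.eqb_neq; lia).
   rewrite IHn by lia. ring. Qed.

Lemma ev2 (P Q : R -> Prop) : (exists T, forall t, T <= t -> P t) -> (exists T, forall t, T <= t -> Q t) ->
  exists T, forall t, T <= t -> P t /\ Q t.
Proof. intros [T1 H1] [T2 H2]. exists (Rmax T1 T2). intros t Ht. split.
 apply H1. eapply Rle_trans; [apply Rmax_l|eauto]. apply H2. eapply Rle_trans; [apply Rmax_r|eauto]. Qed.

Lemma ylim s x k C t : 0 < s k -> Rabs (yv s x k t - sat (s k) C) <= Rabs (x k t - C).
Proof. intros. unfold yv. apply sat_lip; auto. Qed.

Lemma only_if N s alpha amax t0 x : Hyp N s alpha amax t0 x -> integrally_connected N alpha ->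
  (forall i j, (i < N)%nat -> (j < N)%nat -> i <> j -> s i <> s j) ->
  (exists i j, (i < N)%nat /\ (j < N)%nat /\ x i t0 <> x j t0) ->
  consensus N x -> forall i, (i < N)%nat -> / INR N * Rabs (rsum (fun k => x k t0) N) <= s i.
Proof. intros H Hcon Hdist [i1 [j1 [Hi1 [Hj1 Hx]]]] [C HC].
 pose proof H as (Hs & Hsym & Ha & Hamax & Ht0 & Hsol).
 assert (HN: (0 < N)%nat) by lia. assert (HNp: 0 < INR N) by (apply lt_0_INR; auto).
 set (S := rsum (fun k => x k t0) N).
 assert (Heps: forall e, 0 < e -> Rabs (S - INR N * C) <= INR N * e).
 { intros e He. destruct (ev_all (fun i t => Rabs (x i t - C) < e) N) as [T HT].
   { intros i Hi. destruct (HC i Hi e He) as [T HT]. exists T. auto. }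
   set (t := Rmax T t0).
   assert (Et: S - INR N * C = rsum (fun i => x i t - C) N).
   { rewrite rsum_minus, rsum_const. unfold S. rewrite (conservation N s alpha amax t0 x t H). ring. apply Rmax_r. }
   rewrite Et. eapply Rle_trans. apply rsum_abs. rewrite <- rsum_const. apply rsum_le. intros.
   apply Rlt_le. apply HT; auto. apply Rmax_l. }
 assert (SC: S = INR N * C).
 { destruct (Req_dec (S - INR N * C) 0). lra. exfalso.
   assert (Hp: 0 < Rabs (S - INR N * C)) by (apply Rabs_pos_lt; auto).
   specialize (Heps (Rabs (S - INR N * C) / (INR N + 1)) ltac:(apply Rdiv_lt_0_compat; lra)).
   assert (INR N * (Rabs (S - INR N * C) / (INR N + 1)) < Rabs (S - INR N * C)).
   { apply (Rmult_lt_reg_r (INR N + 1)). lra. unfold Rdiv. rewrite Rmult_assoc, Rmult_assoc, Rinv_l by lra. nra. }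
   lra. }
 assert (AbsC: / INR N * Rabs S = Rabs C).
 { rewrite SC, Rabs_mult, (Rabs_right (INR N)) by lra. field. lra. }
 intros i Hi. rewrite AbsC. apply Rnot_lt_le. intro Hlt.
 destruct (argmin_ex s N HN) as [p [Hp Hpmin]].
 assert (HspC: s p < Rabs C) by (pose proof (Hpmin i Hi); lra).
 assert (Hsp: 0 < s p) by auto.
 assert (Hr: exists r, (r < N)%nat /\ r <> p).
 { destruct (Nat.eq_dec i1 p). exists j1. split; auto. intro; subst. apply Hx; auto.
   exists i1; auto. }
 destruct Hr as [r [Hr Hrp]].
 assert (Hsgt: forall k, (k < N)%nat -> k <> p -> s p < s k).
 { intros k Hk Hkp. pose proof (Hpmin k Hk). pose proof (Hdist k p Hk Hp Hkp). lra. }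
 assert (HxC: forall k e, (k < N)%nat -> 0 < e -> exists T, forall t, T <= t -> Rabs (yv s x k t - sat (s k) C) < e /\ Rabs (x k t - C) < e).
 { intros k e Hk He. destruct (HC k Hk e He) as [T HT]. exists T. intros t Ht.
   split; auto. eapply Rle_lt_trans. apply ylim; auto. auto. }
 destruct (Rlt_dec (s p) C) as [Cpos|Cneg].
 -
   set (U := fun i => negb (Nat.eqb i p)).
   assert (Ur: U r = true) by (unfold U; replace (Nat.eqb r p) with false; auto; symmetry; apply Nat.eqb_neq; auto).
   assert (Up: U p = false) by (unfold U; rewrite Nat.eqb_refl; auto).
   assert (Unp: forall k, U k = true -> k <> p).
   { intros k Uk. unfold U in Uk. intro; subst. rewrite Nat.eqb_refl in Uk. discriminate. }
   assert (Upp: forall k, U k = false -> k = p).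
   { intros k Uk. unfold U in Uk. destruct (Nat.eqb k p) eqn:E. apply Nat.eqb_eq; auto. discriminate. }
   destruct (cross N _ U r p (Hcon r p Hr Hp) Ur Up) as [a [b [Ha' [Hb' [Ua [Ub Eab]]]]]].
   assert (b = p) by auto. subst b. assert (Hap: a <> p) by auto.
   assert (Lgt: forall k, (k < N)%nat -> k <> p -> s p < sat (s k) C).
   { intros k Hk Hkp. pose proof (Hsgt k Hk Hkp). pose proof (Hs k Hk).
     apply Rlt_le_trans with (Rmin C (s k)). apply Rmin_glb_lt; lra.
     apply sat_ge; auto. split. pose proof (Rmin_glb C (s k) 0 ltac:(lra) ltac:(lra)). lra. apply Rmin_r. apply Rmin_l. }
   set (d := (sat (s a) C - s p) / 2).
   assert (Hd: 0 < d) by (unfold d; pose proof (Lgt a Ha' Hap); lra).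
   assert (EA: exists T, forall t, T <= t -> forall i, (i < N)%nat -> i <> p -> s p < yv s x i t).
   { cut (exists T, forall t i, T <= t -> (i < N)%nat -> i <> p -> s p < yv s x i t).
     { intros [T HT]. exists T. intros; apply HT; auto. }
     apply (ev_all (fun k t => k <> p -> s p < yv s x k t) N). intros k Hk.
     destruct (Nat.eq_dec k p) as [->|Hkp]. exists 0. intros; congruence.
     destruct (HxC k (sat (s k) C - s p) Hk) as [T HT]. pose proof (Lgt k Hk Hkp); lra.
     exists T. intros t Ht _. destruct (HT t Ht) as [A _]. apply abslt in A. lra. }
   destruct (ev2 _ _ EA (ev2 _ _ (HxC a d Ha' Hd) (HxC p 1 Hp ltac:(lra)))) as [T HT].
   destruct (cut N s alpha amax t0 x U a p (Rmax T t0) H (Rmax_r _ _) Ha' Hp Ua Up Eab) with (M := S - C - 1)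
     as [t [Ht Hsum]].
   + exists d. split; auto. intros t Ht. destruct (HT t (Rle_trans _ _ _ (Rmax_l _ _) Ht)) as [_ [[A _] _]].
     apply abslt in A. pose proof (sat_bound (s p) (x p t) Hsp). apply absle in H0. unfold yv. unfold yv in A.
     unfold d in *. lra.
   + intros t k j Ht Hk Hj Uk Uj. apply Upp in Uj. subst j. apply Unp in Uk.
     destruct (HT t (Rle_trans _ _ _ (Rmax_l _ _) Ht)) as [B _]. specialize (B k Hk Uk).
     pose proof (sat_bound (s p) (x p t) Hsp). apply absle in H0. unfold yv in *. lra.
   + unfold U in Hsum. rewrite (rsum_ind_not (fun i => x i t)) in Hsum by auto. rewrite (conservation N s alpha amax t0 x) in Hsum by first [exact H | eapply Rle_trans; [apply Rmax_r| exact Ht]].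
     fold S in Hsum. destruct (HT t (Rle_trans _ _ _ (Rmax_l _ _) Ht)) as [_ [_ [_ E]]].
     apply abslt in E. lra.
 -
   assert (Cneg': C < - s p).
   { unfold Rabs in HspC. destruct (Rcase_abs C); lra. }
   set (U := fun i => Nat.eqb i p).
   assert (Ur: U r = false) by (unfold U; apply Nat.eqb_neq; auto).
   assert (Up: U p = true) by (unfold U; rewrite Nat.eqb_refl; auto).
   assert (Unp: forall k, U k = false -> k <> p).
   { intros k Uk. unfold U in Uk. intro; subst. rewrite Nat.eqb_refl in Uk. discriminate. }
   assert (Upp: forall k, U k = true -> k = p).
   { intros k Uk. unfold U in Uk. apply Nat.eqb_eq; auto. }
   destruct (cross N _ U p r (Hcon p r Hp Hr) Up Ur) as [a [b [Ha' [Hb' [Ua [Ub Eab]]]]]].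
   assert (a = p) by auto. subst a. assert (Hbp: b <> p) by auto.
   assert (Llt: forall k, (k < N)%nat -> k <> p -> sat (s k) C < - s p).
   { intros k Hk Hkp. pose proof (Hsgt k Hk Hkp). pose proof (Hs k Hk).
     apply Rle_lt_trans with (Rmax C (- s k)).
     apply sat_le; auto. split. apply Rmax_r. pose proof (Rmax_lub C (- s k) 0 ltac:(lra) ltac:(lra)). lra. apply Rmax_l.
     apply Rmax_lub_lt; lra. }
   set (d := (- s p - sat (s b) C) / 2).
   assert (Hd: 0 < d) by (unfold d; pose proof (Llt b Hb' Hbp); lra).
   assert (EA: exists T, forall t, T <= t -> forall i, (i < N)%nat -> i <> p -> yv s x i t < - s p).
   { cut (exists T, forall t i, T <= t -> (i < N)%nat -> i <> p -> yv s x i t < - s p).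
     { intros [T HT]. exists T. intros; apply HT; auto. }
     apply (ev_all (fun k t => k <> p -> yv s x k t < - s p) N). intros k Hk.
     destruct (Nat.eq_dec k p) as [->|Hkp]. exists 0. intros; congruence.
     destruct (HxC k (- s p - sat (s k) C) Hk) as [T HT]. pose proof (Llt k Hk Hkp); lra.
     exists T. intros t Ht _. destruct (HT t Ht) as [A _]. apply abslt in A. lra. }
   destruct (ev2 _ _ EA (ev2 _ _ (HxC b d Hb' Hd) (HxC p 1 Hp ltac:(lra)))) as [T HT].
   destruct (cut N s alpha amax t0 x U p b (Rmax T t0) H (Rmax_r _ _) Hp Hb' Up Ub Eab) with (M := C - 1)
     as [t [Ht Hsum]].
   + exists d. split; auto. intros t Ht. destruct (HT t (Rle_trans _ _ _ (Rmax_l _ _) Ht)) as [_ [[A _] _]].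
     apply abslt in A. pose proof (sat_bound (s p) (x p t) Hsp). apply absle in H0. unfold yv. unfold yv in A.
     unfold d in *. lra.
   + intros t k j Ht Hk Hj Uk Uj. apply Upp in Uk. subst k. apply Unp in Uj.
     destruct (HT t (Rle_trans _ _ _ (Rmax_l _ _) Ht)) as [B _]. specialize (B j Hj Uj).
     pose proof (sat_bound (s p) (x p t) Hsp). apply absle in H0. unfold yv in *. lra.
   + unfold U in Hsum. rewrite (rsum_ind_one (fun i => x i t)) in Hsum by auto.
     destruct (HT t (Rle_trans _ _ _ (Rmax_l _ _) Ht)) as [_ [_ [_ E]]].
     apply abslt in E. lra.
Qed.

Theorem theorem3 (N : nat) (s : nat -> R) (alpha : nat -> nat -> R -> R)
  (amin amax t0 : R) (x : nat -> R -> R) :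
  (forall i, (i < N)%nat -> 0 < s i) ->
  (forall i j, (i < N)%nat -> (j < N)%nat -> i <> j -> s i <> s j) ->
  (forall i j t, (i < N)%nat -> (j < N)%nat -> 0 <= t -> alpha i j t = alpha j i t) ->
  (forall i j t, (i < N)%nat -> (j < N)%nat -> 0 <= t -> 0 <= alpha i j t) ->
  (forall i j, (i < N)%nat -> (j < N)%nat -> cont_ae_nonneg (alpha i j)) ->
  integrally_connected N alpha ->
  0 < amin -> amin <= amax ->
  (forall i j t, (i < N)%nat -> (j < N)%nat -> 0 <= t ->
     alpha i j t = 0 \/ (amin <= alpha i j t <= amax)) ->
  0 <= t0 ->
  is_solution N s alpha t0 x ->
  (exists i j, (i < N)%nat /\ (j < N)%nat /\ x i t0 <> x j t0) ->
  (consensus N x <->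
   forall i, (i < N)%nat -> / INR N * Rabs (rsum (fun k => x k t0) N) <= s i).
Proof.
 intros Hs Hdist Hsym Hnn Hcont Hcon Hamin Hamm Hrange Ht0 Hsol Hdiff.
 assert (H: Hyp N s alpha amax t0 x).
 { unfold Hyp. split; [auto|]. split; [auto|]. split; [|split; [lra|split; auto]].
   intros i0 j0 t1 Hi Hj Ht. split. apply Hnn; auto.
   destruct (Hrange i0 j0 t1 Hi Hj Ht) as [->|[_ A]]; lra. }
 assert (HN: (0 < N)%nat) by (destruct Hdiff as [i [j [Hi _]]]; lia).
 split.
 - intros Hc. apply (only_if N s alpha amax t0 x); auto.
 - intros Hc. apply (if_dir N s alpha amax t0 x); auto.
Qed.
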